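(* Let $\mathbb{F}$ be a field and $f(z)=\sum_{m\ge0}c_mz^m\in\mathbb{F}[[z]]$. Suppose there exist integers $\ell>k\ge1$ such that $H_\ell(f)H_k(f)\neq0$. Then the Padé approximant $[k-1/k]_f(z)$ exists, and there exist a nonzero element $h_k\in\mathbb{F}$ and an integer $k'$ with $k\le k'<\ell$ such that $$f(z)-[k-1/k]_f(z)=h_kz^{k+k'}+\mathcal{O}(z^{k+k'+1}).$$
   Context: For $n\ge1$, the Hankel determinant of $f$ is $H_n(f)=\det(c_{i+j})_{0\le i,j\le n-1}\in\mathbb{F}$, and $H_0(f)=1$. For nonnegative integers $p,q$, the Padé approximant $[p/q]_f(z)$ is the rational fraction $P(z)/Q(z)$ with $P,Q\in\mathbb{F}[z]$, $\deg P\le p$, $\deg Q\le q$, and $f(z)-P(z)/Q(z)=\mathcal{O}(z^{p+q+1})$ in $\mathbb{F}[[z]]$ (the fraction, when it exists, is unique). *)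

(* Defs.v *)
(* Formal power series over a field F are represented by
   their coefficient sequences  c : nat -> F. *)
From HB Require Import structures.
From mathcomp Require Import all_boot all_order all_algebra.
Set Implicit Arguments. Unset Strict Implicit. Unset Printing Implicit Defensive.
Import Order.TTheory GRing.Theory.
Local Open Scope ring_scope.

(* Hankel determinant H_n(f) = det (c_{i+j})_{0<=i,j<=n-1}; for n = 0 the
   0x0 determinant is 1, matching H_0(f) = 1. *)
Definition hankel (F : fieldType) (c : nat -> F) (n : nat) : F :=
  \det (\matrix_(i < n, j < n) c (i + j)%N).

(* First n+1 coefficients of the power series expansion of P/Q in F[[z]],
   for Q with Q(0) <> 0:  g_n = (P_n - sum_{i<n} Q_{n-i} g_i) / Q_0. *)
Fixpoint ratser_seq (F : fieldType) (P Q : {poly F}) (n : nat) : seq F :=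
  match n with
  | 0 => [:: P`_0 / Q`_0]
  | n'.+1 =>
      let s := ratser_seq P Q n' in
      rcons s ((P`_n - \sum_(i < n) Q`_(n - i) * s`_i) / Q`_0)
  end.

(* n-th coefficient of the power series P/Q (meaningful when Q`_0 != 0). *)
Definition ratser (F : fieldType) (P Q : {poly F}) (n : nat) : F :=
  nth 0 (ratser_seq P Q n) n.

(* P/Q is (a representative of) the Pade approximant [p/q]_f:
   deg P <= p, deg Q <= q, Q(0) <> 0 (so P/Q lies in F[[z]]), and
   f - P/Q = O(z^(p+q+1)). *)
Definition is_pade (F : fieldType) (c : nat -> F) (p q : nat)
    (P Q : {poly F}) : Prop :=
  [/\ (size P <= p.+1)%N, (size Q <= q.+1)%N, Q`_0 != 0 &
      forall m, (m < p + q + 1)%N -> c m - ratser P Q m = 0].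

(* Main.v *)
Require Import Defs.
From HB Require Import structures.
From mathcomp Require Import all_boot all_order all_algebra.
From mathcomp Require Import zify ring.
Import GRing.Theory.
Set Implicit Arguments. Unset Strict Implicit.
Local Open Scope ring_scope.

Section Aux.
Variable F : fieldType.

Definition conv (Q : {poly F}) (a : nat -> F) n := \sum_(i < n.+1) Q`_(n - i) * a i.

Lemma size_rs (P Q : {poly F}) n : size (ratser_seq P Q n) = n.+1.
Proof. by elim: n => [|n IH] //=; rewrite size_rcons IH. Qed.

Lemma rs_prefix (P Q : {poly F}) n i : (i <= n)%N -> nth 0 (ratser_seq P Q n) i = ratser P Q i.
Proof.
elim: n => [|n IH]; first by rewrite leqn0 => /eqP ->.
rewrite leq_eqVlt => /orP[/eqP -> //|]; rewrite ltnS => hi.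
by rewrite /= nth_rcons size_rs ltnS hi IH.
Qed.

Lemma ratserS (P Q : {poly F}) n : ratser P Q n.+1 =
  (P`_n.+1 - \sum_(i < n.+1) Q`_(n.+1 - i) * ratser P Q i) / Q`_0.
Proof.
rewrite /ratser /= nth_rcons size_rs ltnn eqxx; congr ((_ - _) / _).
by apply: eq_bigr => i _; rewrite rs_prefix // -ltnS.
Qed.

Lemma ratser_conv (P Q : {poly F}) n : Q`_0 != 0 -> conv Q (ratser P Q) n = P`_n.
Proof.
move=> q0; rewrite /conv big_ord_recr /= subnn.
case: n => [|n]; first by rewrite big_ord0 add0r /ratser /= mulrC divfK.
by rewrite ratserS mulrC divfK // addrC subrK.
Qed.

Lemma convB (Q : {poly F}) a b n : conv Q (fun i => a i - b i) n = conv Q a n - conv Q b n.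
Proof. by rewrite /conv -sumrB; apply: eq_bigr => i _; rewrite mulrBr. Qed.

Lemma conv0 (Q : {poly F}) a N : Q`_0 != 0 -> (forall n, (n < N)%N -> conv Q a n = 0) ->
  forall m, (m < N)%N -> a m = 0.
Proof.
move=> q0 h; elim/ltn_ind => m IH hm.
have := h m hm; rewrite /conv big_ord_recr /= subnn big1 ?add0r.
  by move/eqP; rewrite mulf_eq0 (negbTE q0) /= => /eqP.
move=> i _; rewrite IH ?mulr0 //; apply: ltn_trans (ltn_ord i) hm.
Qed.

Lemma conv_shift (Q : {poly F}) a k r : (size Q <= k.+1)%N ->
  conv Q a (r + k) = \sum_(s < k.+1) Q`_(k - s) * a (r + s).
Proof.
move=> hQ; rewrite /conv -(big_mkord xpredT (fun i => Q`_(r + k - i) * a i)).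
rewrite (@big_cat_nat _ _ _ r 0) /=; [|lia|lia].
rewrite big_nat_cond big1 ?add0r; last first.
  move=> i /andP[/andP[_ hi] _]; rewrite nth_default ?mul0r //.
  by apply: leq_trans hQ _; lia.
rewrite -{1}(add0n r) big_addn -(big_mkord xpredT (fun s => Q`_(k - s) * a (r + s))).
have -> : ((r + k).+1 - r = k.+1)%N by lia.
apply: eq_bigr => i _; congr (Q`_ _ * a _); lia.
Qed.

End Aux.
Unset Implicit Arguments. Set Strict Implicit.
Lemma pade_exists (F : fieldType) (c : nat -> F) n : hankel c n.+1 != 0 ->
  exists P Q : {poly F}, is_pade c n n.+1 P Q.
Proof.
move=> hH.
set H := \matrix_(i < n.+1, j < n.+1) c (i + j)%N.
have Hu : H \in unitmx by rewrite unitmxE unitfE.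
set b := \row_(r < n.+1) - c (r + n.+1)%N.
set y := b *m invmx H.
have hy : y *m H = b by rewrite /y mulmxKV.
have hy' : forall r : 'I_n.+1, \sum_(s < n.+1) y 0 s * c (s + r)%N = - c (r + n.+1)%N.
  move=> r; move/matrixP: hy => /(_ 0 r); rewrite !mxE => <-.
  by apply: eq_bigr => s _; rewrite [H s r]mxE.
set Q : {poly F} := \poly_(j < n.+2) (if j == 0%N then 1 else y 0 (inord (n.+1 - j))).
set P : {poly F} := \poly_(j < n.+1) conv Q c j.
have q0 : Q`_0 = 1 by rewrite coef_poly.
have hQ : (size Q <= n.+2)%N by apply: size_poly.
exists P, Q; split => //; first by apply: size_poly.
  by rewrite q0 oner_neq0.
have key : forall m, (m < n + n.+1 + 1)%N -> conv Q c m = P`_m.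
  move=> m hm; rewrite coef_poly; case: ifP => // hmn.
  have -> : m = ((m - n.+1) + n.+1)%N by lia.
  rewrite conv_shift // big_ord_recr /= subnn q0 mul1r.
  apply/eqP; rewrite addr_eq0; apply/eqP.
  have := hy' (inord (m - n.+1)); rewrite inordK; last by lia.
  move=> <-.
  apply: eq_bigr => s _; rewrite coef_poly.
  have -> : (n.+1 - s < n.+2)%N by lia.
  have -> : (n.+1 - s == 0)%N = false by apply/negbTE; have := ltn_ord s; lia.
  have -> : (n.+1 - (n.+1 - s) = s)%N by have := ltn_ord s; lia.
  by rewrite inord_val addnC.
move=> m hm; apply: (@conv0 _ Q (fun i => c i - ratser P Q i) (n + n.+1 + 1)) => //; first by rewrite q0 oner_neq0.
move=> k hk; rewrite convB key // ratser_conv ?subrr // ?q0 ?oner_neq0 //.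
Qed.

Lemma hankel_sing (F : fieldType) (c : nat -> F) (k l : nat) (P Q : {poly F}) :
  (1 <= k)%N -> (k < l)%N -> is_pade c k.-1 k P Q ->
  (forall j, (j < k + l)%N -> c j - ratser P Q j = 0) -> hankel c l = 0.
Proof.
move=> k1 kl [hP hQ q0 _] hd.
have hc : forall n, (k <= n)%N -> (n < k + l)%N -> conv Q c n = 0.
  move=> n hkn hn.
  have : conv Q (fun i => c i - ratser P Q i) n = 0.
    rewrite /conv big1 // => i _; rewrite hd ?mulr0 //; have := ltn_ord i; lia.
  rewrite convB ratser_conv // nth_default ?subr0 //.
  by apply: leq_trans hP _; lia.
apply/eqP/det0P.
exists (\row_(s < l) (if (s <= k)%N then Q`_(k - s) else 0)).
  apply/negP => /eqP/matrixP /(_ 0 (Ordinal kl)); rewrite !mxE /= leqnn subnn => h.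
  by move: q0; rewrite h eqxx.
apply/matrixP => i j; rewrite !mxE.
transitivity (conv Q c (j + k)%N); last by apply: hc; [lia|have := ltn_ord j; lia].
rewrite conv_shift; last by apply: leq_trans hQ _; lia.
rewrite (@big_ord_widen _ 0 +%R k.+1 l (fun s => Q`_(k - s) * c (j + s)%N) kl) [RHS]big_mkcond /=.
apply: eq_bigr => s _; rewrite !mxE ltnS; case: ifP => _; last by rewrite mul0r.
by rewrite addnC.
Qed.

Theorem theorem3p1 (F : fieldType) (c : nat -> F) (k l : nat) :
  (1 <= k)%N -> (k < l)%N -> hankel c l * hankel c k != 0 ->
  (exists P Q : {poly F}, is_pade c k.-1 k P Q) /\
  (forall P Q : {poly F}, is_pade c k.-1 k P Q ->
     exists (h : F) (k' : nat),
       [/\ h != 0, (k <= k')%N, (k' < l)%N,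
           (forall m, (m < k + k')%N -> c m - ratser P Q m = 0) &
           c (k + k')%N - ratser P Q (k + k')%N = h]).
Proof.
move=> k1 kl; rewrite mulf_eq0 negb_or => /andP[hl hk]; split.
  by case: k k1 kl hk => [//|k] _ _ hk; apply: pade_exists.
move=> P Q hpq.
case: (boolP [exists j : 'I_(k + l), c j - ratser P Q j != 0]); last first.
  move/existsPn => hn; exfalso; move: hl; rewrite (@hankel_sing F c k l P Q k1 kl hpq) ?eqxx //.
  by move=> j hj; have := hn (Ordinal hj); rewrite negbK => /eqP.
move/existsP => [j hj].
have ex : exists m, c m - ratser P Q m != 0 by exists j.
case: (ex_minnP ex) => m hm hmin.
have mj : (m < k + l)%N by apply: leq_ltn_trans (hmin _ hj) (ltn_ord j).
have m2k : (k + k <= m)%N.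
  case: hpq => _ _ _ h; rewrite leqNgt; apply/negP => hmk.
  by move: hm; rewrite h ?eqxx //; lia.
exists (c m - ratser P Q m), (m - k)%N; split => //; try lia.
  move=> i hi; apply/eqP; apply/negPn/negP => hi'.
  by have := hmin _ hi'; lia.
by rewrite subnKC //; lia.
Qed.
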